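(* Let $\phi_1,\phi_2:\mathbb{R}\to\mathbb{R}$ be functions of extended class $\mathcal{K}_\infty$ satisfying $$\phi_1\circ\phi_2(r)>r\ \ \forall r<0,\qquad \phi_1\circ\phi_2(r)<r\ \ \forall r>0.$$ Then there exists a function $\phi$ of extended class $\mathcal{K}_\infty$ such that (1) $\phi_1^{-1}(r)<\phi(r)<\phi_2(r)$ for all $r<0$, and $\phi_2(r)<\phi(r)<\phi_1^{-1}(r)$ for all $r>0$; (2) $\phi$ is continuously differentiable on $\mathbb{R}\setminus\{0\}$ and $\phi'(r)>0$ for all $r\in\mathbb{R}\setminus\{0\}$.
   Context: A continuous function $\phi:\mathbb{R}\to\mathbb{R}$ with $\phi(0)=0$ is of extended class $\mathcal{K}_\infty$ if it is strictly increasing and unbounded above and below (hence a bijection of $\mathbb{R}$, with inverse $\phi^{-1}$ also of extended class $\mathcal{K}_\infty$). $\circ$ denotes composition. *)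

(* Defs.v *)
From Stdlib Require Import Reals.
From Coquelicot Require Import Coquelicot.
Open Scope R_scope.

Definition ext_K_inf (phi : R -> R) : Prop :=
  (forall x, continuous phi x) /\
  phi 0 = 0 /\
  (forall x y, x < y -> phi x < phi y) /\
  (forall M, exists x, M < phi x) /\
  (forall M, exists x, phi x < M).

(* Main.v *)
Require Import Defs.
From Stdlib Require Import Reals Lra ClassicalEpsilon.
From Coquelicot Require Import Coquelicot.
Open Scope R_scope.
Lemma cont_eps (f : R -> R) x : (forall eps, eps > 0 -> exists d, d > 0 /\ forall y, Rabs (y - x) < d -> Rabs (f y - f x) < eps) -> continuous f x.
Proof. intros H. apply continuity_pt_filterlim. intros eps Heps. destruct (H eps Heps) as [d [Hd H']]. exists d. split; auto. intros y [_ Hy]. apply H'. exact Hy. Qed.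
Lemma eps_cont (f : R -> R) x : continuous f x -> (forall eps, eps > 0 -> exists d, d > 0 /\ forall y, Rabs (y - x) < d -> Rabs (f y - f x) < eps).
Proof. intros H%continuity_pt_filterlim eps Heps. destruct (H eps Heps) as [d [Hd H']]. exists d. split; auto. intros y Hy.
destruct (Req_dec y x) as [->|Hne]. rewrite Rminus_diag, Rabs_R0; lra.
apply H'. split. split. constructor. auto. exact Hy. Qed.

Definition sincr (f : R -> R) := forall x y, x < y -> f x < f y.

Lemma sincr_le f : sincr f -> forall x y, x <= y -> f x <= f y.
Proof. intros H x y [Hl| ->]; [left; apply H; auto | right; auto]. Qed.

Lemma sincr_rev f : sincr f -> forall x y, f x < f y -> x < y.
Proof. intros H x y Hf. destruct (Rlt_or_le x y) as [h|h]; auto.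
  apply (sincr_le f H) in h. lra. Qed.

Lemma inv_cont (f finv : R -> R) : sincr f -> (forall t, f (finv t) = t) ->
  forall t, continuous finv t.
Proof.
  intros Hf Hinv t. apply cont_eps. intros eps Heps.
  set (x0 := finv t).
  assert (Ha : f (x0 - eps) < t). { rewrite <- (Hinv t). apply Hf. unfold x0; lra. }
  assert (Hb : t < f (x0 + eps)). { rewrite <- (Hinv t) at 1. apply Hf. unfold x0; lra. }
  exists (Rmin (t - f (x0 - eps)) (f (x0 + eps) - t)). split.
  - apply Rmin_glb_lt; lra.
  - intros y Hy. apply Rabs_def2 in Hy. destruct Hy as [Hy1 Hy2].
    assert (H1 := Rmin_l (t - f (x0 - eps)) (f (x0 + eps) - t)).
    assert (H2 := Rmin_r (t - f (x0 - eps)) (f (x0 + eps) - t)).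
    assert (x0 - eps < finv y).
    { apply (sincr_rev f Hf). rewrite Hinv. lra. }
    assert (finv y < x0 + eps).
    { apply (sincr_rev f Hf). rewrite Hinv. lra. }
    fold x0. apply Rabs_def1; lra.
Qed.

Lemma cmul (f g : R -> R) x : continuous f x -> continuous g x -> continuous (fun y => f y * g y) x.
Proof. intros. apply (@continuous_mult R_UniformSpace R_AbsRing f g x); auto. Qed.
Lemma cminus (f g : R -> R) x : continuous f x -> continuous g x -> continuous (fun y => f y - g y) x.
Proof. intros. apply (@continuous_minus R_UniformSpace R_AbsRing R_NormedModule f g x); auto. Qed.
Lemma cplus (f g : R -> R) x : continuous f x -> continuous g x -> continuous (fun y => f y + g y) x.
Proof. intros. apply (@continuous_plus R_UniformSpace R_AbsRing R_NormedModule f g x); auto. Qed.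
Lemma copp (f : R -> R) x : continuous f x -> continuous (fun y => - f y) x.
Proof. intros. apply (@continuous_opp R_UniformSpace R_AbsRing R_NormedModule f x); auto. Qed.
Lemma der_cont (f : R -> R) x l : is_derive f x l -> continuous f x.
Proof. intros H. apply (@ex_derive_continuous R_AbsRing R_NormedModule). exists l; exact H. Qed.

Section Lip.
Variables m H : R -> R.
Hypothesis Hm : forall x, continuous m x.
Hypothesis HH : forall x, continuous H x.
Hypothesis HmH : forall x, m x < H x.

Definition Sset (x : R) (v : R) : Prop :=
  v = 1 \/ exists y dl, 0 <= dl /\ H y <= m (y + dl) /\ v = dl + Rabs (x - y) / 2.

Lemma Sset_nonneg x v : Sset x v -> 0 <= v.
Proof. intros [->|[y [dl [h1 [_ ->]]]]]. lra.
  assert (0 <= Rabs (x - y)) by apply Rabs_pos. lra. Qed.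

Definition dd (x : R) : R := real (Glb_Rbar (Sset x)).

Lemma dd_fin x : Glb_Rbar (Sset x) = Finite (dd x).
Proof.
  unfold dd. destruct (Glb_Rbar_correct (Sset x)) as [Hlb Hglb].
  assert (A1 : Rbar_le (Glb_Rbar (Sset x)) 1). { apply Hlb. left; auto. }
  assert (A2 : Rbar_le 0 (Glb_Rbar (Sset x))).
  { apply Hglb. intros v Hv. simpl. apply Sset_nonneg with x; auto. }
  destruct (Glb_Rbar (Sset x)); simpl in *; try easy.
Qed.

Lemma dd_le x v : Sset x v -> dd x <= v.
Proof. intros Hv. destruct (Glb_Rbar_correct (Sset x)) as [Hlb _].
  specialize (Hlb v Hv). rewrite dd_fin in Hlb. exact Hlb. Qed.

Lemma dd_ge x c : (forall v, Sset x v -> c <= v) -> c <= dd x.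
Proof. intros Hc. destruct (Glb_Rbar_correct (Sset x)) as [_ Hglb].
  assert (Rbar_le c (Glb_Rbar (Sset x))). { apply Hglb. intros v Hv. apply Hc; auto. }
  rewrite dd_fin in H0. exact H0. Qed.

Lemma dd_le1 x : dd x <= 1.
Proof. apply dd_le. left; auto. Qed.

Lemma dd_lip x1 x2 : dd x1 <= dd x2 + Rabs (x1 - x2) / 2.
Proof.
  assert (dd x1 - Rabs (x1 - x2) / 2 <= dd x2).
  { apply dd_ge. intros v [->|[y [dl [h1 [h2 ->]]]]].
    - assert (dd x1 <= 1) by apply dd_le1. assert (0 <= Rabs (x1 - x2)) by apply Rabs_pos. lra.
    - assert (dd x1 <= dl + Rabs (x1 - y) / 2).
      { apply dd_le. right. exists y, dl. auto. }
      assert (Rabs (x1 - y) <= Rabs (x1 - x2) + Rabs (x2 - y)).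
      { replace (x1 - y) with ((x1 - x2) + (x2 - y)) by ring. apply Rabs_triang. }
      lra. }
  lra.
Qed.

Lemma dd_pos x : 0 < dd x.
Proof.
  set (e := (H x - m x) / 2).
  assert (He : e > 0) by (unfold e; specialize (HmH x); lra).
  destruct (eps_cont m x (Hm x) e He) as [d1 [Hd1 Hc1]].
  destruct (eps_cont H x (HH x) e He) as [d2 [Hd2 Hc2]].
  set (eta := Rmin d1 d2).
  assert (Heta : eta > 0) by (apply Rmin_glb_lt; auto).
  assert (E1 := Rmin_l d1 d2). assert (E2 := Rmin_r d1 d2). fold eta in E1, E2.
  apply Rlt_le_trans with (Rmin 1 (eta / 4)).
  { apply Rmin_glb_lt; lra. }
  apply dd_ge. intros v [->|[y [dl [h1 [h2 ->]]]]].
  - apply Rmin_l.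
  - assert (Hm0 := Rmin_r 1 (eta / 4)).
    destruct (Rle_or_lt (eta / 2) (Rabs (x - y))) as [Hy|Hy].
    + lra.
    + destruct (Rle_or_lt (eta / 2) dl) as [Hdl|Hdl].
      * assert (0 <= Rabs (x - y)) by apply Rabs_pos. lra.
      * exfalso.
        assert (Hy' : Rabs (y - x) < d2). { rewrite Rabs_minus_sym. lra. }
        assert (Hz : Rabs (y + dl - x) < d1).
        { apply Rle_lt_trans with (Rabs (y - x) + Rabs dl).
          replace (y + dl - x) with ((y - x) + dl) by ring. apply Rabs_triang.
          rewrite (Rabs_right dl) by lra. rewrite Rabs_minus_sym. lra. }
        specialize (Hc1 _ Hz). specialize (Hc2 _ Hy').
        apply Rabs_def2 in Hc1. apply Rabs_def2 in Hc2. unfold e in *. lra.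
Qed.

Lemma dd_allowed x dl : 0 <= dl < dd x -> m (x + dl) < H x.
Proof.
  intros [h1 h2]. destruct (Rlt_or_le (m (x + dl)) (H x)) as [h|h]; auto.
  exfalso. assert (dd x <= dl).
  { apply dd_le. right. exists x, dl. repeat split; auto.
    rewrite Rminus_diag, Rabs_R0. lra. }
  lra.
Qed.

Lemma dd_cont x : continuous dd x.
Proof.
  apply cont_eps. intros eps Heps. exists eps. split; auto. intros y Hy.
  assert (A := dd_lip y x). assert (B := dd_lip x y).
  rewrite Rabs_minus_sym in B. apply Rabs_def1; lra.
Qed.

End Lip.

Section Clock.
Variable D : R -> R.
Hypothesis HDc : forall x, continuous D x.
Hypothesis HDp : forall x, 0 < D x.
Hypothesis HDl : forall x1 x2, D x1 <= D x2 + Rabs (x1 - x2) / 2.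

Definition rho x := 2 / D x.

Lemma rho_cont x : continuous rho x.
Proof.
  unfold rho. apply cmul. apply continuous_const.
  apply continuous_Rinv_comp; auto. specialize (HDp x); lra.
Qed.

Lemma rho_pos x : 0 < rho x.
Proof. unfold rho. specialize (HDp x). apply Rdiv_lt_0_compat; lra. Qed.

Lemma rho_int a b : ex_RInt rho a b.
Proof. apply (@ex_RInt_continuous R_CompleteNormedModule). intros; apply rho_cont. Qed.

Definition tau x := RInt rho 0 x.

Lemma tau_deriv x : is_derive tau x (rho x).
Proof.
  apply is_derive_RInt with 0. apply filter_forall. intros b.
  apply RInt_correct, rho_int. apply rho_cont.
Qed.

Lemma tau_incr : sincr tau.
Proof.
  intros x y Hxy.
  apply (incr_function tau m_infty p_infty rho); simpl; auto.
  intros; apply tau_deriv. intros; apply rho_pos.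
Qed.

Lemma tau_diff a b : tau b - tau a = RInt rho a b.
Proof.
  unfold tau. rewrite <- (RInt_Chasles rho 0 a b) by apply rho_int.
  unfold plus; simpl. ring.
Qed.

Lemma RInt_lb (f : R -> R) a b c : a <= b -> ex_RInt f a b ->
  (forall x, a < x < b -> c <= f x) -> c * (b - a) <= RInt f a b.
Proof.
  intros Hab Hex Hc.
  assert (RInt (fun _ => c) a b <= RInt f a b).
  { apply RInt_le; auto. apply ex_RInt_const. }
  rewrite RInt_const in H. unfold scal in H; simpl in H; unfold mult in H; simpl in H. lra.
Qed.

Lemma RInt_ub (f : R -> R) a b c : a <= b -> ex_RInt f a b ->
  (forall x, a < x < b -> f x <= c) -> RInt f a b <= c * (b - a).
Proof.
  intros Hab Hex Hc.
  assert (RInt f a b <= RInt (fun _ => c) a b).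
  { apply RInt_le; auto. apply ex_RInt_const. }
  rewrite RInt_const in H. unfold scal in H; simpl in H; unfold mult in H; simpl in H. lra.
Qed.

Lemma tau_step_r x : tau x + 1 < tau (x + D x).
Proof.
  assert (Hd := HDp x).
  assert (4 / 3 <= tau (x + D x) - tau x).
  { rewrite tau_diff.
    replace (4/3) with ((2 / (3/2 * D x)) * (x + D x - x)) by (field; lra).
    apply RInt_lb. lra. apply rho_int.
    intros u Hu. unfold rho.
    assert (D u <= 3/2 * D x).
    { specialize (HDl u x). rewrite Rabs_right in HDl by lra. lra. }
    specialize (HDp u).
    unfold Rdiv. apply Rmult_le_compat_l. lra. apply Rinv_le_contravar; lra. }
  lra.
Qed.

Lemma tau_step_l x : tau (x - D x) + 1 < tau x.
Proof.
  assert (Hd := HDp x).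
  assert (4 / 3 <= tau x - tau (x - D x)).
  { rewrite tau_diff.
    replace (4/3) with ((2 / (3/2 * D x)) * (x - (x - D x))) by (field; lra).
    apply RInt_lb. lra. apply rho_int.
    intros u Hu. unfold rho.
    assert (D u <= 3/2 * D x).
    { specialize (HDl u x). rewrite Rabs_left in HDl by lra. lra. }
    specialize (HDp u).
    unfold Rdiv. apply Rmult_le_compat_l. lra. apply Rinv_le_contravar; lra. }
  lra.
Qed.

Lemma tau_up (n : nat) : exists x, INR n <= tau x.
Proof.
  induction n as [|n [x Hx]].
  - exists 0. unfold tau. rewrite RInt_point. unfold zero; simpl; lra.
  - exists (x + D x). rewrite S_INR. assert (h := tau_step_r x). lra.
Qed.

Lemma tau_down (n : nat) : exists x, tau x <= - INR n.
Proof.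
  induction n as [|n [x Hx]].
  - exists 0. unfold tau. rewrite RInt_point. unfold zero; simpl; lra.
  - exists (x - D x). rewrite S_INR. assert (h := tau_step_l x). lra.
Qed.

Lemma tau_cont x : continuous tau x.
Proof. eapply der_cont. apply tau_deriv. Qed.

Lemma tau_surj t : exists x, tau x = t.
Proof.
  destruct (INR_unbounded (Rabs t)) as [n Hn].
  destruct (tau_up n) as [b Hb]. destruct (tau_down n) as [a Ha].
  assert (Hta : tau a < t) by (assert (- t <= Rabs t) by (rewrite <- Rabs_Ropp; apply Rle_abs); lra).
  assert (Htb : t < tau b) by (assert (t <= Rabs t) by apply Rle_abs; lra).
  assert (Hab : a < b) by (apply (sincr_rev tau tau_incr); lra).
  destruct (IVT (fun x => tau x - t) a b) as [z [_ Hz]]; auto; try lra.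
  - intros x. apply continuity_pt_minus.
    apply continuity_pt_filterlim, tau_cont.
    apply continuity_pt_const. intros u v; reflexivity.
  - exists z; lra.
Qed.

Definition tinv t := proj1_sig (constructive_indefinite_description _ (tau_surj t)).

Lemma tinv_spec t : tau (tinv t) = t.
Proof. unfold tinv. destruct (constructive_indefinite_description _ _); auto. Qed.

Lemma tinv_tau x : tinv (tau x) = x.
Proof.
  assert (h := tinv_spec (tau x)).
  destruct (Rtotal_order (tinv (tau x)) x) as [l|[e|l]]; auto;
  apply tau_incr in l; lra.
Qed.

Lemma tinv_incr : sincr tinv.
Proof. intros s t h. apply (sincr_rev tau tau_incr). rewrite !tinv_spec; auto. Qed.

Lemma tinv_cont t : continuous tinv t.
Proof. apply (inv_cont tau). apply tau_incr. apply tinv_spec. Qed.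

End Clock.

Lemma ex_RInt_c (f : R -> R) a b : (forall x, continuous f x) -> ex_RInt f a b.
Proof. intros. apply (@ex_RInt_continuous R_CompleteNormedModule). intros; auto. Qed.

Lemma avg_bounds (f : R -> R) a : sincr f -> (forall x, continuous f x) ->
  f a < RInt f a (a + 1) /\ RInt f a (a + 1) < f (a + 1).
Proof.
  intros Hi Hc.
  rewrite <- (RInt_Chasles f a (a + /2) (a + 1)) by (apply ex_RInt_c; auto).
  unfold plus; simpl.
  assert (L1 : f a * (a + /2 - a) <= RInt f a (a + /2)).
  { apply RInt_lb. lra. apply ex_RInt_c; auto. intros x Hx. left; apply Hi; lra. }
  assert (L2 : f (a + /2) * (a + 1 - (a + /2)) <= RInt f (a + /2) (a + 1)).
  { apply RInt_lb. lra. apply ex_RInt_c; auto. intros x Hx. left; apply Hi; lra. }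
  assert (U1 : RInt f a (a + /2) <= f (a + /2) * (a + /2 - a)).
  { apply RInt_ub. lra. apply ex_RInt_c; auto. intros x Hx. left; apply Hi; lra. }
  assert (U2 : RInt f (a + /2) (a + 1) <= f (a + 1) * (a + 1 - (a + /2))).
  { apply RInt_ub. lra. apply ex_RInt_c; auto. intros x Hx. left; apply Hi; lra. }
  assert (h1 : f a < f (a + /2)) by (apply Hi; lra).
  assert (h2 : f (a + /2) < f (a + 1)) by (apply Hi; lra).
  split; nra.
  all: fail.
Qed.

Lemma is_derive_eqv (f : R -> R) x l l' : is_derive f x l -> l = l' -> is_derive f x l'.
Proof. intros h ->; exact h. Qed.

Lemma core (G H : R -> R) : (forall x, continuous G x) -> (forall x, continuous H x) ->
  sincr G -> sincr H -> (forall x, G x < H x) ->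
  exists F dF, (forall x, G x < F x < H x) /\ (forall x, is_derive F x (dF x)) /\
    (forall x, continuous dF x) /\ (forall x, 0 < dF x).
Proof.
  intros HGc HHc HGi HHi HGH.
  set (m := fun x => (G x + H x) * / 2).
  assert (Hmc : forall x, continuous m x).
  { intros; apply cmul; [apply cplus; auto | apply continuous_const]. }
  assert (HmH : forall x, m x < H x) by (intros; unfold m; specialize (HGH x); lra).
  assert (HGm : forall x, G x < m x) by (intros; unfold m; specialize (HGH x); lra).
  assert (Hmi : sincr m).
  { intros x y h; unfold m; specialize (HGi x y h); specialize (HHi x y h); lra. }
  set (D := dd m H).
  assert (HDc : forall x, continuous D x) by (intros; apply dd_cont).
  assert (HDp : forall x, 0 < D x) by (intros; apply dd_pos; auto).
  assert (HDl : forall x1 x2, D x1 <= D x2 + Rabs (x1 - x2) / 2) by (intros; apply dd_lip).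
  set (T := tau D). set (Ti := tinv D HDc HDp HDl).
  assert (TiT : forall x, Ti (T x) = x) by (intros; apply tinv_tau).
  assert (TTi : forall t, T (Ti t) = t) by (intros; apply tinv_spec).
  assert (Tii : sincr Ti) by apply tinv_incr.
  assert (Tic : forall t, continuous Ti t) by (intros; apply tinv_cont).
  assert (Ti_ : sincr T) by (apply tau_incr; auto).
  assert (Tc : forall x, continuous T x) by (intros; apply tau_cont; auto).
  assert (Td : forall x, is_derive T x (rho D x)) by (intros; apply tau_deriv; auto).
  set (M := fun s => m (Ti s)).
  assert (Mc : forall s, continuous M s) by (intros; unfold M; apply (continuous_comp Ti m); auto).
  assert (Mi : sincr M) by (intros s t h; apply Hmi, Tii, h).
  set (I := fun y => RInt M 0 y).
  assert (Id : forall y, is_derive I y (M y)).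
  { intros y. apply is_derive_RInt with 0. apply filter_forall. intros b.
    apply RInt_correct, ex_RInt_c; auto. auto. }
  set (P := fun t => I (t + 1) - I t).
  assert (Peq : forall t, P t = RInt M t (t + 1)).
  { intros t. unfold P, I. rewrite <- (RInt_Chasles M 0 t (t + 1)) by (apply ex_RInt_c; auto).
    unfold plus; simpl; ring. }
  assert (Pd : forall t, is_derive P t (M (t + 1) - M t)).
  { intros t. apply (@is_derive_minus R_AbsRing R_NormedModule).
    - apply is_derive_eqv with (scal 1 (M (t + 1))).
      apply (is_derive_comp I (fun t => t + 1)). apply Id.
      auto_derive; auto; ring.
      unfold scal; simpl; unfold mult; simpl; ring.
    - apply Id. }
  set (F := fun x => P (T x)).
  set (dF := fun x => rho D x * (M (T x + 1) - M (T x))).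
  exists F, dF. split; [|split; [|split]].
  - intros x. unfold F. rewrite Peq.
    destruct (avg_bounds M (T x) Mi Mc) as [B1 B2].
    split.
    + unfold M at 1 in B1. rewrite TiT in B1. specialize (HGm x). lra.
    + set (z := Ti (T x + 1)) in *.
      assert (Tz : T z = T x + 1) by (unfold z; apply TTi).
      assert (zx : x < z) by (apply (sincr_rev T Ti_); lra).
      assert (zx2 : z < x + D x).
      { apply (sincr_rev T Ti_). assert (h := tau_step_r D HDc HDp HDl x). fold T in h. lra. }
      assert (Hal : m (x + (z - x)) < H x) by (apply dd_allowed; unfold D in zx2; lra).
      replace (x + (z - x)) with z in Hal by ring.
      unfold M at 2 in B2. fold z in B2. lra.
  - intros x. unfold F, dF. apply is_derive_eqv with (scal (rho D x) (M (T x + 1) - M (T x))).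
    apply (is_derive_comp P T). apply Pd. apply Td.
    reflexivity.
  - intros x. unfold dF. apply cmul. apply rho_cont; auto.
    apply cminus.
    + apply (continuous_comp (fun y => T y + 1) M). apply cplus; auto. apply continuous_const. auto.
    + apply (continuous_comp T M); auto.
  - intros x. unfold dF. apply Rmult_lt_0_compat. apply rho_pos; auto.
    assert (M (T x) < M (T x + 1)) by (apply Mi; lra). lra.
Qed.

Lemma ln_cont x : 0 < x -> continuous ln x.
Proof. intros. eapply der_cont. apply is_derive_ln; auto. Qed.
Lemma exp_cont x : continuous exp x.
Proof. eapply der_cont. apply is_derive_exp. Qed.

Lemma half (g h : R -> R) : (forall x, continuous g x) -> (forall x, continuous h x) ->
  sincr g -> sincr h -> (forall x, 0 < x -> 0 < g x < h x) ->
  exists f df, (forall r, 0 < r -> g r < f r < h r) /\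
    (forall r, 0 < r -> is_derive f r (df r) /\ continuous df r /\ 0 < df r).
Proof.
  intros Hgc Hhc Hgi Hhi Hgh.
  set (G := fun x => ln (g (exp x))). set (H := fun x => ln (h (exp x))).
  assert (Hg0 : forall x, 0 < g (exp x)) by (intros; apply Hgh, exp_pos).
  assert (Hh0 : forall x, 0 < h (exp x)) by (intros x; specialize (Hgh (exp x) (exp_pos x)); lra).
  assert (HGc : forall x, continuous G x).
  { intros x. unfold G. apply (continuous_comp (fun x => g (exp x)) ln).
    apply (continuous_comp exp g). apply exp_cont. auto. apply ln_cont; auto. }
  assert (HHc : forall x, continuous H x).
  { intros x. unfold H. apply (continuous_comp (fun x => h (exp x)) ln).
    apply (continuous_comp exp h). apply exp_cont. auto. apply ln_cont; auto. }
  assert (HGi : sincr G).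
  { intros x y hxy. unfold G. apply ln_increasing; auto. apply Hgi, exp_increasing, hxy. }
  assert (HHi : sincr H).
  { intros x y hxy. unfold H. apply ln_increasing; auto. apply Hhi, exp_increasing, hxy. }
  assert (HGH : forall x, G x < H x).
  { intros x. unfold G, H. apply ln_increasing; auto. apply Hgh, exp_pos. }
  destruct (core G H HGc HHc HGi HHi HGH) as [F [dF [B [Fd [dFc dFp]]]]].
  exists (fun r => exp (F (ln r))), (fun r => / r * dF (ln r) * exp (F (ln r))).
  split.
  - intros r hr. specialize (B (ln r)). unfold G, H in B. rewrite exp_ln in B by auto.
    destruct B as [B1 B2]. split.
    + rewrite <- (exp_ln (g r)) by (apply Hgh; auto). apply exp_increasing; auto.
    + rewrite <- (exp_ln (h r)) by (specialize (Hgh r hr); lra). apply exp_increasing; auto.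
  - intros r hr. split; [|split].
    + apply is_derive_eqv with (scal (scal (/ r) (dF (ln r))) (exp (F (ln r)))).
      apply (is_derive_comp exp (fun r => F (ln r))). apply is_derive_exp.
      apply (is_derive_comp F ln). apply Fd. apply is_derive_ln; auto.
      reflexivity.
    + apply cmul. apply cmul. apply continuous_Rinv; lra.
      apply (continuous_comp ln dF). apply ln_cont; auto. auto.
      apply (continuous_comp (fun r => F (ln r)) exp).
      apply (continuous_comp ln F). apply ln_cont; auto. eapply der_cont, Fd.
      apply exp_cont.
    + apply Rmult_lt_0_compat. apply Rmult_lt_0_compat. apply Rinv_0_lt_compat; auto.
      auto. apply exp_pos.
Qed.

Lemma loc_pos r (P : R -> Prop) : 0 < r -> (forall y, 0 < y -> P y) -> locally r P.
Proof. intros hr HP. exists (mkposreal r hr). intros y Hy. apply HP.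
  change (Rabs (y - r) < r) in Hy. apply Rabs_def2 in Hy. lra. Qed.
Lemma loc_neg r (P : R -> Prop) : r < 0 -> (forall y, y < 0 -> P y) -> locally r P.
Proof. intros hr HP. assert (h : 0 < - r) by lra. exists (mkposreal (- r) h). intros y Hy. apply HP.
  change (Rabs (y - r) < - r) in Hy. apply Rabs_def2 in Hy. lra. Qed.

Theorem lemma4 (phi1 phi2 phi1inv : R -> R) :
  ext_K_inf phi1 -> ext_K_inf phi2 ->
  (forall r, phi1 (phi1inv r) = r) -> (forall r, phi1inv (phi1 r) = r) ->
  (forall r, r < 0 -> phi1 (phi2 r) > r) ->
  (forall r, r > 0 -> phi1 (phi2 r) < r) ->
  exists phi : R -> R,
    ext_K_inf phi /\
    (forall r, r < 0 -> phi1inv r < phi r /\ phi r < phi2 r) /\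
    (forall r, r > 0 -> phi2 r < phi r /\ phi r < phi1inv r) /\
    (forall r, r <> 0 ->
       ex_derive phi r /\ continuous (Derive phi) r /\ Derive phi r > 0).
Proof.
  intros [c1 [z1 [i1 [u1 l1]]]] [c2 [z2 [i2 [u2 l2]]]] Hinv1 Hinv2 Hneg Hpos.
  assert (i1' : sincr phi1) by exact i1. assert (i2' : sincr phi2) by exact i2.
  assert (ii : sincr phi1inv).
  { intros x y h. apply (sincr_rev phi1 i1'). rewrite !Hinv1; auto. }
  assert (ci : forall x, continuous phi1inv x) by (intros; apply (inv_cont phi1); auto).
  assert (zi : phi1inv 0 = 0) by (rewrite <- z1 at 1; apply Hinv2).
  assert (gp : forall r, 0 < r -> phi2 r < phi1inv r).
  { intros r hr. apply (sincr_rev phi1 i1'). rewrite Hinv1. apply Hpos; auto. }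
  assert (gn : forall r, r < 0 -> phi1inv r < phi2 r).
  { intros r hr. apply (sincr_rev phi1 i1'). rewrite Hinv1. apply Hneg; auto. }
  assert (p2p : forall r, 0 < r -> 0 < phi2 r) by (intros r hr; rewrite <- z2; apply i2'; auto).
  assert (p2n : forall r, r < 0 -> phi2 r < 0) by (intros r hr; rewrite <- z2; apply i2'; auto).
  destruct (half phi2 phi1inv c2 ci i2' ii) as [fp [dfp [Bp Dp]]].
  { intros x hx. split; auto. }
  assert (cneg : forall (f : R -> R), (forall x, continuous f x) -> forall x, continuous (fun s => - f (- s)) x).
  { intros f hf x. apply copp. apply (continuous_comp (fun s => - s) f). apply copp, continuous_id. auto. }
  destruct (half (fun s => - phi2 (- s)) (fun s => - phi1inv (- s))) as [fn [dfn [Bn Dn]]].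
  { apply cneg; auto. } { apply cneg; auto. }
  { intros x y h. assert (phi2 (- y) < phi2 (- x)) by (apply i2'; lra). lra. }
  { intros x y h. assert (phi1inv (- y) < phi1inv (- x)) by (apply ii; lra). lra. }
  { intros x hx. assert (h1 := p2n (- x)). assert (h2 := gn (- x)). lra. }
  assert (fpi : forall x y, 0 < x -> x < y -> fp x < fp y).
  { intros x y hx hxy. apply (incr_function fp (Finite 0) p_infty dfp); simpl; auto; try lra.
    intros; apply Dp; auto. intros; apply Dp; auto. }
  assert (fni : forall x y, 0 < x -> x < y -> fn x < fn y).
  { intros x y hx hxy. apply (incr_function fn (Finite 0) p_infty dfn); simpl; auto; try lra.
    intros; apply Dn; auto. intros; apply Dn; auto. }
  set (phi := fun r => match Rlt_dec 0 r with left _ => fp r | right _ =>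
                match Rlt_dec r 0 with left _ => - fn (- r) | right _ => 0 end end).
  assert (phP : forall r, 0 < r -> phi r = fp r).
  { intros r hr. unfold phi. destruct (Rlt_dec 0 r); [auto | lra]. }
  assert (phN : forall r, r < 0 -> phi r = - fn (- r)).
  { intros r hr. unfold phi. destruct (Rlt_dec 0 r); [lra|]. destruct (Rlt_dec r 0); [auto|lra]. }
  assert (ph0 : phi 0 = 0).
  { unfold phi. destruct (Rlt_dec 0 0); [lra|]. destruct (Rlt_dec 0 0); [lra|auto]. }
  assert (BP : forall r, 0 < r -> phi2 r < phi r < phi1inv r).
  { intros r hr. rewrite phP; auto. }
  assert (BN : forall r, r < 0 -> phi1inv r < phi r < phi2 r).
  { intros r hr. rewrite phN; auto. assert (h := Bn (- r)). rewrite Ropp_involutive in h.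
    destruct h as [h1 h2]; lra. }
  assert (DP : forall r, 0 < r -> is_derive phi r (dfp r)).
  { intros r hr. apply is_derive_ext_loc with fp. apply loc_pos; auto. intros; rewrite phP; auto.
    apply Dp; auto. }
  assert (DN : forall r, r < 0 -> is_derive phi r (dfn (- r))).
  { intros r hr. apply is_derive_ext_loc with (fun y => - fn (- y)).
    apply loc_neg; auto. intros; rewrite phN; auto.
    apply is_derive_eqv with (opp (scal (-1) (dfn (- r)))).
    apply (@is_derive_opp R_AbsRing R_NormedModule (fun y => fn (- y))).
    apply (is_derive_comp fn (fun y => - y)). apply Dn; lra.
    auto_derive; auto; ring.
    unfold opp, scal; simpl; unfold mult; simpl; ring. }
  exists phi. split; [|split; [|split]].
  - split; [|split; [|split; [|split]]].
    + intros x. destruct (Rtotal_order x 0) as [hx|[hx|hx]].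
      * eapply der_cont, DN; auto.
      * subst x. apply cont_eps. intros eps heps.
        destruct (eps_cont phi1inv 0 (ci 0) eps heps) as [d [hd Hd]].
        exists d. split; auto. intros y hy. rewrite ph0. specialize (Hd y hy).
        rewrite zi in Hd. rewrite !Rminus_0_r in *.
        destruct (Rtotal_order y 0) as [h|[h|h]].
        -- specialize (BN y h). specialize (p2n y h). apply Rabs_def2 in Hd. apply Rabs_def1; lra.
        -- subst y. rewrite ph0, Rabs_R0. lra.
        -- specialize (BP y h). specialize (p2p y h). apply Rabs_def2 in Hd. apply Rabs_def1; lra.
      * eapply der_cont, DP; auto.
    + exact ph0.
    + intros x y hxy.
      assert (sP : forall r, 0 < r -> 0 < phi r) by (intros r hr; specialize (BP r hr); specialize (p2p r hr); lra).
      assert (sN : forall r, r < 0 -> phi r < 0) by (intros r hr; specialize (BN r hr); specialize (p2n r hr); lra).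
      destruct (Rtotal_order x 0) as [hx|[hx|hx]]; destruct (Rtotal_order y 0) as [hy|[hy|hy]].
      * rewrite !phN by auto. assert (fn (- y) < fn (- x)) by (apply fni; lra). lra.
      * subst y. rewrite ph0. auto.
      * specialize (sN x hx). specialize (sP y hy). lra.
      * lra.
      * lra.
      * subst x. rewrite ph0. auto.
      * lra.
      * lra.
      * rewrite !phP by auto. apply fpi; auto.
    + intros M. destruct (u2 M) as [x hx]. exists (Rmax x 1).
      assert (h1 : 0 < Rmax x 1) by (apply Rlt_le_trans with 1; [lra| apply Rmax_r]).
      specialize (BP _ h1). assert (phi2 x <= phi2 (Rmax x 1)) by (apply sincr_le; auto; apply Rmax_l).
      lra.
    + intros M. destruct (l2 M) as [x hx]. exists (Rmin x (-1)).
      assert (h1 : Rmin x (-1) < 0) by (apply Rle_lt_trans with (-1); [apply Rmin_r| lra]).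
      specialize (BN _ h1). assert (phi2 (Rmin x (-1)) <= phi2 x) by (apply sincr_le; auto; apply Rmin_l).
      lra.
  - exact BN.
  - intros r hr. apply BP; auto.
  - intros r hr. destruct (Rtotal_order r 0) as [h|[h|h]]; [|lra|].
    + split; [|split].
      * exists (dfn (- r)). apply DN; auto.
      * apply continuous_ext_loc with (fun y => dfn (- y)).
        apply loc_neg; auto. intros y hy. symmetry. apply is_derive_unique, DN; auto.
        apply (continuous_comp (fun y => - y) dfn). apply copp, continuous_id. apply Dn; lra.
      * rewrite (is_derive_unique _ _ _ (DN r h)). apply Dn; lra.
    + split; [|split].
      * exists (dfp r). apply DP; auto.
      * apply continuous_ext_loc with dfp.
        apply loc_pos; auto. intros y hy. symmetry. apply is_derive_unique, DP; auto.
        apply Dp; auto.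
      * rewrite (is_derive_unique _ _ _ (DP r h)). apply Dp; auto.
Qed.
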